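(* Let $h,g_1,g_2>0$ and $f\in(0,1)$. For $\Delta>0$ define (logarithms base $2$) \begin{align*} I_{hd,1}(\Delta)&=f\log\Big(1+\frac{h^2}{1+\Delta}+g_2^2\Big)+(1-f)\log(1+g_2^2),\\ I_{hd,2}(\Delta)&=(1-f)\log(1+g_1^2+g_2^2)+f\Big\{\log(1+g_2^2)-\log\frac{1+\Delta}{\Delta}\Big\}. \end{align*} Then there is a unique $\Delta>0$ with $I_{hd,1}(\Delta)=I_{hd,2}(\Delta)$, and this $\Delta=\Delta^*(f)$ maximizes $[\min\{I_{hd,1}(\Delta),I_{hd,2}(\Delta)\}]^+$ over $\Delta>0$, where $[x]^+=\max\{x,0\}$.
   Context: $[\min\{I_{hd,1},I_{hd,2}\}]^+$ is the quantize-map-and-forward rate of the half-duplex Gaussian single-relay channel in which the relay listens for a fraction $f$ of the block and transmits for the remaining fraction $1-f$, using a Gaussian vector quantizer of distortion $\Delta$; $h,g_1,g_2$ are the source-relay, relay-destination and source-destination channel magnitudes, all known to the relay. *)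

(* Defs.v *)
From Stdlib Require Import Reals.
Open Scope R_scope.

Definition log2 (x : R) : R := ln x / ln 2.

Definition pos_part (x : R) : R := Rmax x 0.

Definition I_hd1 (h g1 g2 f D : R) : R :=
  f * log2 (1 + h ^ 2 / (1 + D) + g2 ^ 2) + (1 - f) * log2 (1 + g2 ^ 2).

Definition I_hd2 (h g1 g2 f D : R) : R :=
  (1 - f) * log2 (1 + g1 ^ 2 + g2 ^ 2)
  + f * (log2 (1 + g2 ^ 2) - log2 ((1 + D) / D)).

Definition qmf_rate (h g1 g2 f D : R) : R :=
  pos_part (Rmin (I_hd1 h g1 g2 f D) (I_hd2 h g1 g2 f D)).

(* Main.v *)
Require Import Defs.
From Stdlib Require Import Reals Lra.
Open Scope R_scope.

Lemma ln2_pos : 0 < ln 2.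
Proof. pose proof ln_lt_2. lra. Qed.

Lemma ln_le' x y : 0 < x -> x <= y -> ln x <= ln y.
Proof. intros Hx [H|H]. left; apply ln_increasing; auto. subst; lra. Qed.

Lemma key h g1 g2 f D : 0 < D ->
  I_hd1 h g1 g2 f D - I_hd2 h g1 g2 f D =
  (f * ln (((1 + g2^2) * (1 + D) + h^2) / ((1 + g2^2) * D))
   - (1 - f) * (ln (1 + g1^2 + g2^2) - ln (1 + g2^2))) / ln 2.
Proof.
  intros HD.
  assert (HA : 0 < 1 + g2^2) by (pose proof (pow2_ge_0 g2); lra).
  assert (Hh : 0 <= h^2) by apply pow2_ge_0.
  assert (Hq : 0 <= h^2 / (1 + D)) by (unfold Rdiv; apply Rmult_le_pos; [lra| left; apply Rinv_0_lt_compat; lra]).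
  assert (E : ((1 + g2^2) * (1 + D) + h^2) / ((1 + g2^2) * D) =
     (1 + h^2/(1+D) + g2^2) * ((1 + D) / D) * / (1 + g2^2)) by (field; lra).
  rewrite E, ln_mult, ln_mult, ln_Rinv; try lra.
  all: try (apply Rinv_0_lt_compat; lra);
     try (apply Rdiv_lt_0_compat; lra);
     try (apply Rmult_lt_0_compat; [lra| apply Rdiv_lt_0_compat; lra]);
     try (unfold Rdiv; apply Rmult_lt_0_compat; [lra| apply Rinv_0_lt_compat; lra]).
  all: unfold I_hd1, I_hd2, log2; pose proof ln2_pos; try (field; lra).
Qed.

Theorem mainTheorem12 (h g1 g2 f : R) :
  0 < h -> 0 < g1 -> 0 < g2 -> 0 < f < 1 ->
  exists Dstar : R,
    (0 < Dstar /\ I_hd1 h g1 g2 f Dstar = I_hd2 h g1 g2 f Dstar /\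
     (forall D : R, 0 < D -> I_hd1 h g1 g2 f D = I_hd2 h g1 g2 f D -> D = Dstar)) /\
    (forall D : R, 0 < D -> qmf_rate h g1 g2 f D <= qmf_rate h g1 g2 f Dstar).
Proof.
  intros Hh Hg1 Hg2 [Hf0 Hf1].
  pose proof ln2_pos as L2.
  assert (Hh2 : 0 < h^2) by (apply pow_lt; lra).
  assert (Hg12 : 0 < g1^2) by (apply pow_lt; lra).
  assert (Hg22 : 0 < g2^2) by (apply pow_lt; lra).
  set (A := 1 + g2^2). set (B := 1 + g1^2 + g2^2).
  assert (HA : 1 < A) by (unfold A; lra).
  assert (HAB : ln A < ln B) by (apply ln_increasing; unfold A, B; lra).
  set (c := (1 - f) / f * (ln B - ln A)).
  assert (Hc : 0 < c).
  { unfold c. apply Rmult_lt_0_compat; [apply Rdiv_lt_0_compat|]; lra. }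
  set (K := exp c).
  assert (HK : 1 < K) by (unfold K; rewrite <- exp_0; apply exp_increasing; lra).
  set (Ds := (A + h^2) / (A * (K - 1))).
  assert (HDs : 0 < Ds).
  { unfold Ds. apply Rdiv_lt_0_compat; [lra| apply Rmult_lt_0_compat; lra]. }
  assert (Eq : forall D, 0 < D -> I_hd1 h g1 g2 f D = I_hd2 h g1 g2 f D -> D = Ds).
  { intros D HD E.
    assert (E2 := key h g1 g2 f D HD). fold A B in E2.
    rewrite E in E2. replace (I_hd2 h g1 g2 f D - I_hd2 h g1 g2 f D) with 0 in E2 by ring.
    assert (E3 : f * ln ((A * (1 + D) + h ^ 2) / (A * D)) = (1 - f) * (ln B - ln A)).
    { assert (Z: (f * ln ((A * (1 + D) + h ^ 2) / (A * D)) - (1 - f) * (ln B - ln A)) = 0).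
      { apply (Rmult_eq_reg_r (/ ln 2)). rewrite Rmult_0_l. exact (eq_sym E2).
        apply Rinv_neq_0_compat; lra. }
      lra. }
    assert (E4 : ln ((A * (1 + D) + h ^ 2) / (A * D)) = ln K).
    { unfold K. rewrite ln_exp. unfold c.
      apply (Rmult_eq_reg_l f); [|lra]. rewrite E3. field. lra. }
    apply ln_inv in E4.
    2: { apply Rdiv_lt_0_compat; [|apply Rmult_lt_0_compat]; nra. }
    2: { unfold K; apply exp_pos. }
    assert (E5 : K * (A * D) = A * (1 + D) + h ^ 2).
    { rewrite <- E4. field. nra. }
    unfold Ds. apply (Rmult_eq_reg_r (A * (K - 1))); [| nra].
    field_simplify; [nra| nra]. }
  assert (EqDs : I_hd1 h g1 g2 f Ds = I_hd2 h g1 g2 f Ds).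
  { assert (E2 := key h g1 g2 f Ds HDs). fold A B in E2.
    assert (X : (A * (1 + Ds) + h ^ 2) / (A * Ds) = K).
    { unfold Ds. field. repeat split; try lra. }
    rewrite X in E2. unfold K in E2. rewrite ln_exp in E2. unfold c in E2.
    replace (f * ((1 - f) / f * (ln B - ln A)) - (1 - f) * (ln B - ln A)) with 0 in E2
      by (field; lra).
    unfold Rdiv in E2. rewrite Rmult_0_l in E2. lra. }
  assert (M1 : forall D, Ds <= D -> I_hd1 h g1 g2 f D <= I_hd1 h g1 g2 f Ds).
  { intros D HD. unfold I_hd1, log2, Rdiv.
    apply Rplus_le_compat_r. apply Rmult_le_compat_l; [lra|].
    apply Rmult_le_compat_r; [left; apply Rinv_0_lt_compat; lra|].
    apply ln_le'.
    - assert (0 < h^2 * / (1 + D)) by (apply Rmult_lt_0_compat; [lra|apply Rinv_0_lt_compat; lra]). lra.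
    - apply Rplus_le_compat_r, Rplus_le_compat_l, Rmult_le_compat_l; [lra|].
      apply Rinv_le_contravar; lra. }
  assert (M2 : forall D, 0 < D -> D <= Ds -> I_hd2 h g1 g2 f D <= I_hd2 h g1 g2 f Ds).
  { intros D HD HD2. unfold I_hd2, log2, Rdiv.
    apply Rplus_le_compat_l. apply Rmult_le_compat_l; [lra|].
    rewrite <- !Rmult_minus_distr_r.
    apply Rmult_le_compat_r; [left; apply Rinv_0_lt_compat; lra|].
    apply Rplus_le_compat_l, Ropp_le_contravar. apply ln_le'.
    - apply Rmult_lt_0_compat; [lra|apply Rinv_0_lt_compat; lra].
    - replace ((1 + D) * / D) with (1 + / D) by (field; lra).
      replace ((1 + Ds) * / Ds) with (1 + / Ds) by (field; lra).
      apply Rplus_le_compat_l, Rinv_le_contravar; lra. }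
  exists Ds. split; [split; [exact HDs| split; [exact EqDs| exact Eq]]|].
  intros D HD. unfold qmf_rate, pos_part.
  apply Rle_max_compat_r.
  replace (Rmin (I_hd1 h g1 g2 f Ds) (I_hd2 h g1 g2 f Ds)) with (I_hd1 h g1 g2 f Ds)
    by (rewrite <- EqDs; unfold Rmin; destruct Rle_dec; lra).
  destruct (Rle_dec D Ds) as [Hle|Hgt].
  - rewrite EqDs. eapply Rle_trans; [apply Rmin_r|]. apply M2; lra.
  - eapply Rle_trans; [apply Rmin_l|]. apply M1; lra.
Qed.
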